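(* (i) Let $A$ be a $3\times m$ matrix with entries in $\{0,1,-1\}$ and let $B\in\mathcal{Q}_0(A^t)$. Then $(AB)^{[2]}$ is a $P_0$-matrix, and no nonreal eigenvalue of $AB$ lies in the open left half-plane $\mathbb{C}_-$. (ii) Let $A$ be an $m\times 3$ matrix with entries in $\{0,1,-1\}$ and let $B\in\mathcal{Q}_0(A^t)$. Then no nonreal eigenvalue of $AB$ lies in $\mathbb{C}_-$.
   Context: For $M\in\mathbb{R}^{n\times m}$, $\mathcal{Q}(M)$ is the set of real matrices with the same entrywise sign pattern as $M$, and $\mathcal{Q}_0(M)$ its closure. A square real matrix is a $P_0$-matrix if all principal minors are nonnegative. $M^{[2]}$ denotes the second additive compound of a square matrix $M\in\mathbb{R}^{n\times n}$: the matrix of $u\wedge v\mapsto Mu\wedge v+u\wedge Mv$ on $\Lambda^2\mathbb{R}^n$ in the lexicographically ordered basis $e_i\wedge e_j$, $i<j$. *)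

(* Defs.v *)
From HB Require Import structures.
From mathcomp Require Import all_boot all_order all_algebra.
From mathcomp Require Import complex.
From mathcomp Require Import Rstruct.
From Stdlib Require Rdefinitions.
Notation R := Rdefinitions.R.
Set Implicit Arguments. Unset Strict Implicit. Unset Printing Implicit Defensive.
Import Order.TTheory GRing.Theory Num.Theory.
Local Open Scope ring_scope.

(* Closure Q_0(M) of the sign-pattern class Q(M): entrywise, the sign of B i j
   is either 0 or the sign of M i j. *)
Definition in_Q0 (n m : nat) (M B : 'M[R]_(n, m)) : Prop :=
  forall i j, Num.sg (B i j) \in [:: 0; Num.sg (M i j)].

Definition entries_01m (n m : nat) (A : 'M[R]_(n, m)) : Prop :=
  forall i j, A i j \in [:: 0; 1; -1].

Definition principal_minor (n : nat) (M : 'M[R]_n) (S : {set 'I_n}) : R :=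
  \det (\matrix_(i < #|S|, j < #|S|) M (enum_val i) (enum_val j)).

Definition P0_matrix (n : nat) (M : 'M[R]_n) : Prop :=
  forall S : {set 'I_n}, 0 <= principal_minor M S.

(* Index set of the basis e_i /\ e_j, i < j, of Lambda^2 R^n. Its enumeration
   (enum of a subtype of a product of ordinals) is lexicographic. *)
Definition wedge_idx (n : nat) := {p : 'I_n * 'I_n | (val p.1 < val p.2)%N}.

(* Second additive compound: the matrix of u/\v |-> Mu/\v + u/\Mv in the
   basis (e_i /\ e_j)_{i<j}, lexicographically ordered.  The entry in row
   (k,l) and column (i,j) is the coefficient of e_k/\e_l in
   M e_i /\ e_j + e_i /\ M e_j. *)
Definition compound2_entry (n : nat) (M : 'M[R]_n) (r c : wedge_idx n) : R :=
  let: (k, l) := val r in let: (i, j) := val c in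
  (j == l)%:R * M k i - (j == k)%:R * M l i
  + (i == k)%:R * M l j - (i == l)%:R * M k j.

Definition compound2 (n : nat) (M : 'M[R]_n) : 'M[R]_(#|{: wedge_idx n}|) :=
  \matrix_(r, c) compound2_entry M (enum_val r) (enum_val c).

Definition eigenvalueC (n : nat) (M : 'M[R]_n) (z : R[i]) : bool :=
  root (char_poly (map_mx (fun x : R => x%:C)%C M)) z.

Definition nonreal_in_open_LHP (z : R[i]) : bool :=
  (complex.Im z != 0) && (complex.Re z < 0).

(* Main.v *)
Require Import Defs.
From HB Require Import structures.
From mathcomp Require Import all_boot all_order all_algebra.
From mathcomp Require Import complex.
From mathcomp Require Import Rstruct.
From mathcomp Require Import ring lra zify.
Import Order.TTheory GRing.Theory Num.Theory.
Local Open Scope ring_scope.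
Set Implicit Arguments. Unset Strict Implicit.

Section Cx.
Local Open Scope complex_scope.
Lemma mulC (a b c d : R) : (a +i* b) * (c +i* d) = (a * c - b * d) +i* (a * d + b * c).
Proof. by []. Qed.
Lemma addC (a b c d : R) : (a +i* b) + (c +i* d) = (a + c) +i* (b + d).
Proof. by []. Qed.
Lemma oppC (a b : R) : - (a +i* b) = (- a) +i* (- b).
Proof. by []. Qed.
Lemma realC (a : R) : a%:C = a +i* 0.
Proof. by []. Qed.

Lemma cubicC (t s d a b : R) :
  (a +i* b) ^+ 3 - t%:C * (a +i* b) ^+ 2 + s%:C * (a +i* b) - d%:C =
  (a^+3 - 3 * a * b^+2 - t * (a^+2 - b^+2) + s * a - d)
   +i* (b * (3 * a^+2 - b^+2 - 2 * t * a + s)).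
Proof.
rewrite !exprS expr0 !realC.
rewrite !(mulC, addC, oppC).
apply/eqP; rewrite eq_complex /=; apply/andP; split; apply/eqP; ring.
Qed.
End Cx.
Lemma cubic_fact (t s d a b : R) :
  a^+3 - 3 * a * b^+2 - t * (a^+2 - b^+2) + s * a - d = 0 ->
  b * (3 * a^+2 - b^+2 - 2 * t * a + s) = 0 -> b != 0 -> a < 0 -> s * t - d < 0.
Proof.
move=> hX hY0 bn0 an.
have hY : 3 * a^+2 - b^+2 - 2 * t * a + s = 0 by apply: (mulfI bn0); rewrite hY0 mulr0.
have hs : s = b^+2 + 2 * t * a - 3 * a^+2 by lra.
have hd : d = a^+3 - 3 * a * b^+2 - t * (a^+2 - b^+2) + s * a by lra.
have -> : s * t - d = 2 * a * (b^+2 + (t - a)^+2) by rewrite hd hs; ring.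
have hb : 0 < b^+2 by rewrite exprn_even_gt0.
have hp : 0 < b^+2 + (t - a)^+2 by rewrite ltr_wpDr // sqr_ge0.
have : 2 * a < 0 by lra.
by move=> h; rewrite pmulr_llt0.
Qed.

Lemma prod2 (x y u v : R) : `|x| <= u -> `|y| <= v -> x * y <= u * v.
Proof.
move=> hx hy; apply: le_trans (ler_norm _) _; rewrite normrM.
by apply: ler_pM.
Qed.

Lemma prod3 (x y w u v r : R) : `|x| <= u -> `|y| <= v -> `|w| <= r -> x * y * w <= u * v * r.
Proof.
move=> hx hy hw; apply: le_trans (ler_norm _) _; rewrite !normrM.
apply: ler_pM => //; rewrite ?mulr_ge0 //; exact: ler_pM.
Qed.

Definition D3 (m00 m01 m02 m10 m11 m12 m20 m21 m22 : R) :=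
  (m00 + m11) * (m00 + m22) * (m11 + m22) - (m00 + m11) * (m01 * m10)
  - (m00 + m22) * (m02 * m20) - (m11 + m22) * (m12 * m21)
  - m01 * m12 * m20 - m02 * m21 * m10.

Lemma core3 (m00 m01 m02 m10 m11 m12 m20 m21 m22 : R) :
  `|m01| <= m11 -> `|m10| <= m00 -> `|m02| <= m22 -> `|m20| <= m00 ->
  `|m12| <= m22 -> `|m21| <= m11 -> 0 <= m00 -> 0 <= m11 -> 0 <= m22 ->
  0 <= D3 m00 m01 m02 m10 m11 m12 m20 m21 m22.
Proof.
move=> h01 h10 h02 h20 h12 h21 a0 b0 c0; rewrite /D3.
have p1 := prod2 h01 h10. have p2 := prod2 h02 h20. have p3 := prod2 h12 h21.
have t1 := prod3 h01 h12 h20. have t2 := prod3 h02 h21 h10.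
have q1 : (m00 + m11) * (m01 * m10) <= (m00 + m11) * (m11 * m00) by rewrite ler_wpM2l // addr_ge0.
have q2 : (m00 + m22) * (m02 * m20) <= (m00 + m22) * (m22 * m00) by rewrite ler_wpM2l // addr_ge0.
have q3 : (m11 + m22) * (m12 * m21) <= (m11 + m22) * (m22 * m11) by rewrite ler_wpM2l // addr_ge0.
have e : (m00 + m11) * (m00 + m22) * (m11 + m22) = (m00 + m11) * (m11 * m00) + (m00 + m22) * (m22 * m00)
   + (m11 + m22) * (m22 * m11) + m11 * m22 * m00 + m22 * m11 * m00 by ring.
lra.
Qed.

Lemma core2 (a b c x y : R) : `|x| <= c -> `|y| <= b -> 0 <= a -> 0 <= b -> 0 <= c ->
  0 <= (a + b) * (a + c) - x * y.
Proof.
move=> hx hy a0 b0 c0; have p := prod2 hx hy.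
have : c * b <= (a + b) * (a + c) by nra.
lra.
Qed.

Definition mn {T : Type} {n} (A : 'M[T]_n.+1) (i j : nat) := A (inord i) (inord j).

Lemma mnE {T : Type} {n} (A : 'M[T]_n.+1) i j : A i j = mn A (val i) (val j).
Proof. by rewrite /mn !inord_val. Qed.

Definition cE (M : 'M[R]_3) (k l i j : nat) : R :=
  (j == l)%:R * mn M k i - (j == k)%:R * mn M l i + (i == k)%:R * mn M l j - (i == l)%:R * mn M k j.

Lemma centry M r c : compound2_entry M r c =
  cE M (val (val r).1) (val (val r).2) (val (val c).1) (val (val c).2).
Proof.
case: r => [[k l] p]; case: c => [[i j] q].
by rewrite /compound2_entry /cE /= !(mnE M).
Qed.

Lemma wedge_cases (w : wedge_idx 3) : ((val (val w).2 < 3) && (val (val w).1 < val (val w).2))%N.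
Proof. by case: w => [[k l] /= p]; rewrite p ltn_ord. Qed.

Lemma wedge_eq (w1 w2 : wedge_idx 3) : val (val w1).1 = val (val w2).1 ->
  val (val w1).2 = val (val w2).2 -> w1 = w2.
Proof.
case: w1 => [[a b] ?]; case: w2 => [[c d] ?] /= e1 e2; apply: val_inj => /=.
by congr pair; apply: val_inj.
Qed.

Lemma wedge_ne n (g : 'I_n -> wedge_idx 3) : injective g -> forall i j, i != j ->
  ~~ ((val (val (g i)).1 == val (val (g j)).1) && (val (val (g i)).2 == val (val (g j)).2))%N.
Proof.
move=> ginj i j /eqP nij; apply/negP => /andP[/eqP e1 /eqP e2].
by apply: nij; apply: ginj; apply: wedge_eq.
Qed.

Lemma card_le3 n (g : 'I_n -> wedge_idx 3) : injective g -> (n <= 3)%N.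
Proof.
move=> ginj.
pose h (w : wedge_idx 3) : 'I_3 := inord (val (val w).1 + val (val w).2 - 1).
have hinj : injective h.
  move=> w1 w2; rewrite /h => /(congr1 (@nat_of_ord 3)).
  have /andP[h2 h1] := wedge_cases w1; have /andP[h4 h3] := wedge_cases w2.
  rewrite !inordK; [|lia|lia] => E.
  apply: wedge_eq; lia.
have := @leq_card _ _ (h \o g) (inj_comp hinj ginj).
by rewrite !card_ord.
Qed.

Lemma det2 (T : comNzRingType) (A : 'M[T]_2) :
  \det A = mn A 0 0 * mn A 1 1 - mn A 0 1 * mn A 1 0.
Proof.
rewrite (expand_det_row _ ord0) !big_ord_recl big_ord0 /cofactor !det_mx11 !mxE.
rewrite !(mnE A) /= /bump /=.
by rewrite expr0 expr1 !mul1r mulN1r addr0 mulrN.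
Qed.

Lemma det3 (T : comNzRingType) (A : 'M[T]_3) :
  \det A = mn A 0%N 0%N * (mn A 1%N 1%N * mn A 2%N 2%N - mn A 1%N 2%N * mn A 2%N 1%N)
         - mn A 0%N 1%N * (mn A 1%N 0%N * mn A 2%N 2%N - mn A 1%N 2%N * mn A 2%N 0%N)
         + mn A 0%N 2%N * (mn A 1%N 0%N * mn A 2%N 1%N - mn A 1%N 1%N * mn A 2%N 0%N).
Proof.
rewrite (expand_det_row _ ord0) !big_ord_recl big_ord0 /cofactor !det2 /mn !mxE.
rewrite !(mnE A) /= /bump /= !inordK //=.
rewrite !exprS !expr0 /= ?addn0 ?add0n -[(1 + 1)%N]/2%N.
ring.
Qed.

Lemma ge0_eq (x y : R) : 0 <= y -> x = y -> 0 <= x.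
Proof. by move=> h ->. Qed.


Definition dom3 (M : 'M[R]_3) := forall i j : 'I_3, `|M i j| <= M j j.

Ltac leaf c1 c2 c3 c4 d01 d02 d12 := rewrite /cE /=; first
  [ apply: (ge0_eq c4); rewrite /D3; ring
  | apply: (ge0_eq c1); ring | apply: (ge0_eq c2); ring | apply: (ge0_eq c3); ring
  | apply: (ge0_eq d01); ring | apply: (ge0_eq d02); ring | apply: (ge0_eq d12); ring ].

Lemma inord_ne n (i j : nat) : (i <= n)%N -> (j <= n)%N -> i != j -> (inord i : 'I_n.+1) != inord j.
Proof. by move=> hi hj; rewrite -val_eqE /= !inordK. Qed.

Lemma minor_gen (M : 'M[R]_3) (Hd : dom3 M) n (g : 'I_n -> wedge_idx 3) :
  injective g -> 0 <= \det (\matrix_(i, j) compound2_entry M (g i) (g j)).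
Proof.
move=> ginj; have n3 := card_le3 ginj.
have F i j : `|mn M i j| <= mn M j j := Hd (inord i) (inord j).
have G i : 0 <= mn M i i := le_trans (normr_ge0 _) (F i i).
have d01 : 0 <= mn M 0%N 0%N + mn M 1%N 1%N by rewrite addr_ge0.
have d02 : 0 <= mn M 0%N 0%N + mn M 2%N 2%N by rewrite addr_ge0.
have d12 : 0 <= mn M 1%N 1%N + mn M 2%N 2%N by rewrite addr_ge0.
have c1 := core2 (F 1%N 2%N) (F 2%N 1%N) (G 0%N) (G 1%N) (G 2%N).
have c2 := core2 (F 0%N 2%N) (F 2%N 0%N) (G 1%N) (G 0%N) (G 2%N).
have c3 := core2 (F 0%N 1%N) (F 1%N 0%N) (G 2%N) (G 0%N) (G 1%N).
have c4 := core3 (F 0%N 1%N) (F 1%N 0%N) (F 0%N 2%N) (F 2%N 0%N) (F 1%N 2%N) (F 2%N 1%N) (G 0%N) (G 1%N) (G 2%N).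
case: n g ginj n3 => [|[|[|[|n]]]] g ginj n3 //.
- by rewrite det_mx00.
- rewrite det_mx11 mxE centry.
  move: (wedge_cases (g ord0)).
  move: (val (val (g ord0)).1) (val (val (g ord0)).2).
  by case=> [|[|[|?]]] [|[|[|?]]] //= _; leaf c1 c2 c3 c4 d01 d02 d12.
- rewrite det2 /mn !mxE !centry.
  move: (wedge_ne ginj (inord_ne (n:=1) (i:=0) (j:=1) isT isT isT)).
  move: (wedge_cases (g (inord 0))) (wedge_cases (g (inord 1))).
  move: (val (val (g (inord 0))).1) (val (val (g (inord 0))).2).
  move: (val (val (g (inord 1))).1) (val (val (g (inord 1))).2).
  by case=> [|[|[|?]]] [|[|[|?]]] [|[|[|?]]] [|[|[|?]]] //= _ _ _; leaf c1 c2 c3 c4 d01 d02 d12.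
- rewrite det3 /mn !mxE !centry.
  move: (wedge_ne ginj (inord_ne (n:=2) (i:=0) (j:=1) isT isT isT)).
  move: (wedge_ne ginj (inord_ne (n:=2) (i:=0) (j:=2) isT isT isT)).
  move: (wedge_ne ginj (inord_ne (n:=2) (i:=1) (j:=2) isT isT isT)).
  move: (wedge_cases (g (inord 2))).
  move: (val (val (g (inord 2))).1) (val (val (g (inord 2))).2).
  move: (wedge_cases (g (inord 1))).
  move: (val (val (g (inord 1))).1) (val (val (g (inord 1))).2).
  move: (wedge_cases (g (inord 0))).
  move: (val (val (g (inord 0))).1) (val (val (g (inord 0))).2).
  by case=> [|[|[|?]]] [|[|[|?]]] //= _; case=> [|[|[|?]]] [|[|[|?]]] //= _;
     case=> [|[|[|?]]] [|[|[|?]]] //= _ _ _ _; leaf c1 c2 c3 c4 d01 d02 d12.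
Qed.

Lemma P0_compound (M : 'M[R]_3) (Hd : dom3 M) : P0_matrix (compound2 M).
Proof.
move=> S; rewrite /principal_minor.
have -> : \matrix_(i < #|S|, j < #|S|) compound2 M (enum_val i) (enum_val j) =
   \matrix_(i, j) compound2_entry M (enum_val (enum_val i)) (enum_val (enum_val j)).
  by apply/matrixP => i j; rewrite !mxE.
apply: (minor_gen Hd (g := fun i => enum_val (enum_val i))).
by move=> i j /enum_val_inj /enum_val_inj.
Qed.

Lemma inordE3 (i j : nat) : (i < 3)%N -> (j < 3)%N -> ((inord i : 'I_3) == inord j) = (i == j).
Proof. by move=> hi hj; rewrite -val_eqE /= !inordK. Qed.

Lemma mnD (M : 'M[R]_3) (z : R[i]) (i j : nat) : (i < 3)%N -> (j < 3)%N ->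
  mn (z%:M - map_mx (fun x : R => x%:C%C) M) i j = z *+ (i == j) - (mn M i j)%:C%C.
Proof. by move=> hi hj; rewrite /mn !mxE inordE3. Qed.

Lemma eig_det (M : 'M[R]_3) (Hd : dom3 M) (z : R[i]) :
  \det (z%:M - map_mx (fun x : R => x%:C%C) M) = 0 -> ~~ nonreal_in_open_LHP z.
Proof.
have F i j : `|mn M i j| <= mn M j j := Hd (inord i) (inord j).
have G i : 0 <= mn M i i := le_trans (normr_ge0 _) (F i i).
move=> hdet.
rewrite det3 !mnD //= ?mulr1n ?mulr0n ?subr0 ?sub0r in hdet.
pose t := mn M 0%N 0%N + mn M 1%N 1%N + mn M 2%N 2%N.
pose s := mn M 0%N 0%N * mn M 1%N 1%N - mn M 0%N 1%N * mn M 1%N 0%N + mn M 0%N 0%N * mn M 2%N 2%N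
   - mn M 0%N 2%N * mn M 2%N 0%N + mn M 1%N 1%N * mn M 2%N 2%N - mn M 1%N 2%N * mn M 2%N 1%N.
pose d := mn M 0%N 0%N * (mn M 1%N 1%N * mn M 2%N 2%N - mn M 1%N 2%N * mn M 2%N 1%N)
         - mn M 0%N 1%N * (mn M 1%N 0%N * mn M 2%N 2%N - mn M 1%N 2%N * mn M 2%N 0%N)
         + mn M 0%N 2%N * (mn M 1%N 0%N * mn M 2%N 1%N - mn M 1%N 1%N * mn M 2%N 0%N).
have E : (z - (mn M 0%N 0%N)%:C%C) *
    ((z - (mn M 1%N 1%N)%:C%C) * (z - (mn M 2%N 2%N)%:C%C) -
     - (mn M 1%N 2%N)%:C%C * - (mn M 2%N 1%N)%:C%C) -
    - (mn M 0%N 1%N)%:C%C *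
    (- (mn M 1%N 0%N)%:C%C * (z - (mn M 2%N 2%N)%:C%C) -
     - (mn M 1%N 2%N)%:C%C * - (mn M 2%N 0%N)%:C%C) +
    - (mn M 0%N 2%N)%:C%C *
    (- (mn M 1%N 0%N)%:C%C * - (mn M 2%N 1%N)%:C%C -
     (z - (mn M 1%N 1%N)%:C%C) * - (mn M 2%N 0%N)%:C%C) =
   z ^+ 3 - t%:C%C * z ^+ 2 + s%:C%C * z - d%:C%C.
  rewrite /t /s /d !(rmorphD, rmorphB, rmorphN, rmorphM). ring.
move: hdet; rewrite E {E}.
case: z => a b; rewrite cubicC => /eqP; rewrite eq_complex /= => /andP[/eqP hX /eqP hY].
apply/negP => /andP[bn an].
have h1 := cubic_fact hX hY bn an.
have h2 := core3 (F 0%N 1%N) (F 1%N 0%N) (F 0%N 2%N) (F 2%N 0%N) (F 1%N 2%N) (F 2%N 1%N) (G 0%N) (G 1%N) (G 2%N).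
have : D3 (mn M 0%N 0%N) (mn M 0%N 1%N) (mn M 0%N 2%N) (mn M 1%N 0%N) (mn M 1%N 1%N) (mn M 1%N 2%N)
   (mn M 2%N 0%N) (mn M 2%N 1%N) (mn M 2%N 2%N) = s * t - d by rewrite /D3 /s /t /d; ring.
lra.
Qed.


Lemma root_det n (X : 'M[R[i]]_n) (z : R[i]) : root (char_poly X) z -> \det (z%:M - X) = 0.
Proof.
rewrite -eigenvalue_root_char => /eigenvalueP [v Hv vn0].
apply/eqP/det0P; exists v => //.
by rewrite mulmxBr mul_mx_scalar Hv subrr.
Qed.

Lemma key (x y b : R) : x \in [:: 0; 1; -1] -> y \in [:: 0; 1; -1] ->
  Num.sg b \in [:: 0; Num.sg y] -> `|x * b| <= y * b.
Proof.
move=> hx hy hb.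
have hx1 : `|x| <= 1.
  by move: hx; rewrite !inE => /or3P[]/eqP->; rewrite ?normr0 ?normrN ?normr1.
have hyb : y * b = `|b|.
  move: hy hb; rewrite !inE => /or3P[]/eqP-> hb.
  - by move: hb; rewrite sgr0 orbb sgr_eq0 => /eqP->; rewrite mulr0 normr0.
  - rewrite mul1r ger0_norm // -sgr_ge0.
    by case/orP: hb => /eqP->; rewrite ?sgr1.
  - rewrite mulN1r ler0_norm // -sgr_le0.
    by case/orP: hb => /eqP->; rewrite ?sgrN1 // lerN10.
rewrite hyb normrM.
by rewrite ler_piMl.
Qed.

Lemma dom_AB m (A : 'M[R]_(3, m)) (B : 'M[R]_(m, 3)) :
  entries_01m A -> in_Q0 A^T B -> dom3 (A *m B).
Proof.
move=> hA hB i j; rewrite !mxE.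
apply: le_trans (ler_norm_sum _ _ _) _; apply: ler_sum => k _.
by apply: key; [exact: hA | exact: hA | have := hB k j; rewrite mxE].
Qed.

Lemma dom_BA m (A : 'M[R]_(m, 3)) (B : 'M[R]_(3, m)) :
  entries_01m A -> in_Q0 A^T B -> dom3 (B *m A)^T.
Proof.
move=> hA hB i j; rewrite !mxE.
apply: le_trans (ler_norm_sum _ _ _) _; apply: ler_sum => k _.
rewrite mulrC [X in _ <= X]mulrC.
by apply: key; [exact: hA | exact: hA | have := hB j k; rewrite mxE].
Qed.

Local Notation f := (fun x : R => x%:C%C).

Theorem proposition4p1 :
  (forall (m : nat) (A : 'M[R]_(3, m)) (B : 'M[R]_(m, 3)),
     entries_01m A -> in_Q0 A^T B ->
     P0_matrix (compound2 (A *m B)) /\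
     (forall z : R[i], eigenvalueC (A *m B) z -> ~~ nonreal_in_open_LHP z)) /\
  (forall (m : nat) (A : 'M[R]_(m, 3)) (B : 'M[R]_(3, m)),
     entries_01m A -> in_Q0 A^T B ->
     forall z : R[i], eigenvalueC (A *m B) z -> ~~ nonreal_in_open_LHP z).
Proof.
split.
  move=> m A B hA hB; have Hd := dom_AB hA hB; split; first exact: P0_compound.
  by move=> z /root_det; apply: eig_det.
move=> m A B hA hB z hz; have Hd := dom_BA hA hB.
apply/negP => hnr.
have z0 : z != 0.
  by apply: contraTneq hnr => ->; rewrite /nonreal_in_open_LHP /= eqxx.
move: hz; rewrite /eigenvalueC -eigenvalue_root_char => /eigenvalueP [v Hv vn0].
rewrite map_mxM in Hv.
have hw : (v *m map_mx f A) *m (map_mx f B *m map_mx f A) = z *: (v *m map_mx f A).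
  by rewrite mulmxA -(mulmxA v) Hv scalemxAl.
have wn0 : v *m map_mx f A != 0.
  apply: contraNneq vn0 => w0.
  have : z *: v = 0 by rewrite -Hv mulmxA w0 mul0mx.
  by move/eqP; rewrite scaler_eq0 (negPf z0).
have hdet : \det (z%:M - map_mx f (B *m A)) = 0.
  apply/eqP/det0P; exists (v *m map_mx f A) => //.
  by rewrite map_mxM mulmxBr mul_mx_scalar hw subrr.
have : \det (z%:M - map_mx f (B *m A)^T) = 0.
  by rewrite -map_trmx -tr_scalar_mx -linearB /= det_tr.
by move/(eig_det Hd); rewrite hnr.
Qed.
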